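(* If $\Lambda$ is a subgroup of a group $\Gamma$, then $\mathrm{Lit}(\Lambda)\le\mathrm{Lit}(\Gamma)$.
   Context: $T_1(\Gamma)$ is the space of all $f\colon\Gamma\to\mathbf{C}$ for which there exist $f_1,f_2\colon\Gamma\times\Gamma\to\mathbf{C}$ with $f(x^{-1}y)=f_1(x,y)+f_2(x,y)$ for all $x,y$, $\sup_x\sum_y|f_1(x,y)|<\infty$, $\sup_y\sum_x|f_2(x,y)|<\infty$; $\mathrm{Lit}(\Gamma)=\inf\{p>0:T_1(\Gamma)\subseteq\ell^p(\Gamma)\}\in[0,\infty]$. *)

(* Defs.v *)
From HB Require Import structures.
From mathcomp Require Import all_boot all_order all_algebra.
From mathcomp Require Import all_classical all_reals.
From mathcomp Require Import ereal esum exp.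
From mathcomp.real_closed Require Import complex.
Set Implicit Arguments. Unset Strict Implicit. Unset Printing Implicit Defensive.
Import Order.TTheory GRing.Theory Num.Theory.
Local Open Scope classical_set_scope.
Local Open Scope ring_scope.

Record groupOn (G : Type) := GroupOn {
  gmul : G -> G -> G;
  ginv : G -> G;
  gone : G;
  gmulA : forall x y z, gmul x (gmul y z) = gmul (gmul x y) z;
  gmul1 : forall x, gmul gone x = x;
  gmulV : forall x, gmul (ginv x) x = gone }.

Definition is_subgroup (G : Type) (g : groupOn G) (H : set G) : Prop :=
  H (gone g) /\ (forall x y, H x -> H y -> H (gmul g x y)) /\
  (forall x, H x -> H (ginv g x)).

Section Sub.
Variables (G : Type) (g : groupOn G) (H : set G) (hH : is_subgroup g H).
Let S := {x : G | H x}.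
Definition sub_mul (a b : S) : S :=
  exist _ (gmul g (proj1_sig a) (proj1_sig b))
    (proj1 (proj2 hH) _ _ (proj2_sig a) (proj2_sig b)).
Definition sub_inv (a : S) : S :=
  exist _ (ginv g (proj1_sig a)) (proj2 (proj2 hH) _ (proj2_sig a)).
Definition sub_one : S := exist _ (gone g) (proj1 hH).
Lemma sub_mulA (x y z : S) : sub_mul x (sub_mul y z) = sub_mul (sub_mul x y) z.
Proof. apply: eq_exist; exact: gmulA. Qed.
Lemma sub_mul1 (x : S) : sub_mul sub_one x = x.
Proof. case: x => x hx; apply: eq_exist; exact: gmul1. Qed.
Lemma sub_mulV (x : S) : sub_mul (sub_inv x) x = sub_one.
Proof. apply: eq_exist; exact: gmulV. Qed.
Definition subgroupOn : groupOn {x : G | H x} :=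
  GroupOn sub_mulA sub_mul1 sub_mulV.
End Sub.

Local Open Scope ereal_scope.

Definition T1 (R : realType) (G : Type) (g : groupOn G) : set (G -> R[i]) :=
  [set f | exists f1 f2 : G -> G -> R[i],
     (forall x y, f (gmul g (ginv g x) y) = (f1 x y + f2 x y)%R) /\
     ereal_sup [set \esum_(y in [set: {classic G}]) (Normc.normc (f1 x y))%:E
               | x in [set: G]] < +oo /\
     ereal_sup [set \esum_(x in [set: {classic G}]) (Normc.normc (f2 x y))%:E
               | y in [set: G]] < +oo].

Definition lp (R : realType) (G : Type) (p : R) : set (G -> R[i]) :=
  [set f | \esum_(x in [set: {classic G}]) ((Normc.normc (f x)) `^ p)%:E < +oo].

(* Lit(Gamma) = inf { p > 0 : T_1(Gamma) subset ell^p(Gamma) } in [0, +oo]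
   (inf of the empty set is +oo). *)
Definition Lit (R : realType) (G : Type) (g : groupOn G) : \bar R :=
  ereal_inf [set p%:E | p in [set p : R | (0 < p)%R /\ @T1 R G g `<=` @lp R G p]].

(* Main.v *)
Require Import Defs.
From HB Require Import structures.
From mathcomp Require Import all_boot all_order all_algebra.
From mathcomp Require Import all_classical all_reals.
From mathcomp Require Import ereal esum exp.
From mathcomp.real_closed Require Import complex.
Set Implicit Arguments. Unset Strict Implicit. Unset Printing Implicit Defensive.
Import Order.TTheory GRing.Theory Num.Theory.
Local Open Scope classical_set_scope.

Lemma gmulVr G (g : groupOn G) x : gmul g x (ginv g x) = gone g.
Proof.
rewrite -[LHS](gmul1 g) -[in LHS](gmulV g (ginv g x)).
by rewrite -gmulA [gmul g _ (gmul g x _)]gmulA gmulV gmul1 gmulV.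
Qed.

Lemma gmul1r G (g : groupOn G) x : gmul g x (gone g) = x.
Proof. by rewrite -(gmulV g x) gmulA gmulVr gmul1. Qed.

Lemma ginv_uniq G (g : groupOn G) a b : gmul g a b = gone g -> a = ginv g b.
Proof.
move=> h; by rewrite -[a](gmul1r g) -(gmulVr g b) gmulA h gmul1.
Qed.

Lemma ginvK G (g : groupOn G) x : ginv g (ginv g x) = x.
Proof. by apply/esym/ginv_uniq; rewrite gmulVr. Qed.

Lemma ginvM G (g : groupOn G) x y : ginv g (gmul g x y) = gmul g (ginv g y) (ginv g x).
Proof.
apply/esym/ginv_uniq.
by rewrite -gmulA [gmul g (ginv g x) _]gmulA gmulV gmul1 gmulV.
Qed.

Lemma gmulKV G (g : groupOn G) x y : gmul g (ginv g x) (gmul g x y) = y.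
Proof. by rewrite gmulA gmulV gmul1. Qed.

Lemma gmulK G (g : groupOn G) x y : gmul g x (gmul g (ginv g x) y) = y.
Proof. by rewrite gmulA gmulVr gmul1. Qed.

Lemma subV G (g : groupOn G) H (hH : is_subgroup g H) x : H (ginv g x) -> H x.
Proof. by move=> /(proj2 (proj2 hH)); rewrite ginvK. Qed.

Lemma cosetC G (g : groupOn G) H (hH : is_subgroup g H) x y :
  H (gmul g (ginv g x) y) -> H (gmul g (ginv g y) x).
Proof. by move=> /(proj2 (proj2 hH)); rewrite ginvM ginvK. Qed.

Definition rep G (g : groupOn G) (H : set G) (x : G) : G :=
  @xget {classic G} (gone g) [set z | H (gmul g (ginv g x) z)].

Lemma rep_in G (g : groupOn G) H (hH : is_subgroup g H) x :
  H (gmul g (ginv g x) (rep g H x)).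
Proof. apply: (@xgetI {classic G} _ [set z | H (gmul g (ginv g x) z)] x) => /=; rewrite gmulV; exact: (proj1 hH). Qed.

Lemma rep_eq G (g : groupOn G) H (hH : is_subgroup g H) x y :
  H (gmul g (ginv g x) y) -> rep g H x = rep g H y.
Proof.
move=> hxy; rewrite /rep; f_equal; apply/funext => z /=; apply/propext; split.
- move=> hz; have := proj1 (proj2 hH) _ _ (cosetC hH hxy) hz.
  by rewrite -gmulA gmulK.
- move=> hz; have := proj1 (proj2 hH) _ _ hxy hz.
  by rewrite -gmulA gmulK.
Qed.

Lemma aa_in G (g : groupOn G) H (hH : is_subgroup g H) x :
  H (gmul g (ginv g (rep g H x)) x).
Proof. exact: cosetC (rep_in hH x). Qed.

Definition aa G (g : groupOn G) H (hH : is_subgroup g H) x : {x : G | H x} :=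
  exist _ _ (aa_in hH x).

Lemma aa_key G (g : groupOn G) H (hH : is_subgroup g H) x y :
  H (gmul g (ginv g x) y) ->
  gmul g (ginv g x) y = gmul g (ginv g (proj1_sig (aa hH x))) (proj1_sig (aa hH y)).
Proof.
move=> hxy /=; rewrite -(rep_eq hH hxy) ginvM ginvK -gmulA.
by rewrite [gmul g (rep g H x) _]gmulA gmulVr gmul1.
Qed.

Lemma aa_rep G (g : groupOn G) H (hH : is_subgroup g H) x (b : {x : G | H x}) :
  aa hH (gmul g (rep g H x) (proj1_sig b)) = b.
Proof.
case: b => b hb; apply: eq_exist => /=.
have h : H (gmul g (ginv g x) (gmul g (rep g H x) b)).
  by rewrite gmulA; apply: (proj1 (proj2 hH)) => //; exact: rep_in.
by rewrite -(rep_eq hH h) gmulKV.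
Qed.

Local Open Scope ring_scope.
Local Open Scope ereal_scope.

Lemma reindexH (R : realType) G (g : groupOn G) H (hH : is_subgroup g H) (c : G)
  (psi : G -> \bar R) :
  (forall y, ~ H (gmul g (ginv g c) y) -> psi y = 0) ->
  \esum_(y in [set: {classic G}]) psi y =
  \esum_(b in [set: {classic {x : G | H x}}]) psi (gmul g c (proj1_sig b)).
Proof.
move=> h0.
rewrite -(esum_image [set: {classic {x : G | H x}}]
            (fun b : {classic {x : G | H x}} => (gmul g c (proj1_sig b) : {classic G})) psi).
  rewrite esum_mkcond [in RHS]esum_mkcond; apply: eq_esum => y _.
  rewrite in_setT; case: ifPn => // /negP; rewrite inE /= => hn.
  apply: h0 => hy; apply: hn.
  exists (exist _ _ hy) => //=; by rewrite gmulK.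
move=> [a ha] [b hb] _ _ /= e; apply: eq_exist.
by rewrite -(gmulKV g c a) e gmulKV.
Qed.

Definition ext (R : realType) G (H : set G) (f : {x : G | H x} -> R[i]) (y : G) : R[i] :=
  match pselect (H y) with left hy => f (exist _ y hy) | right _ => 0%R end.

Lemma ext_eq (R : realType) G (H : set G) (f : {x : G | H x} -> R[i]) y b :
  y = proj1_sig b -> ext f y = f b.
Proof.
move=> ->; rewrite /ext; case: pselect => [hy|hn]; last by case: hn; exact: proj2_sig.
by congr f; case: b hy => b hb hy /=; apply: eq_exist.
Qed.

Lemma ext_out (R : realType) G (H : set G) (f : {x : G | H x} -> R[i]) y :
  ~ H y -> ext f y = 0%R.
Proof. by rewrite /ext; case: pselect. Qed.

Definition F1 (R : realType) G (g : groupOn G) H (hH : is_subgroup g H)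
  (f1 : {x : G | H x} -> {x : G | H x} -> R[i]) (x y : G) : R[i] :=
  if pselect (H (gmul g (ginv g x) y)) then f1 (aa hH x) (aa hH y) else 0%R.

Lemma H_rep_out G (g : groupOn G) H (hH : is_subgroup g H) x y :
  ~ H (gmul g (ginv g (rep g H x)) y) -> ~ H (gmul g (ginv g x) y).
Proof.
move=> hn hxy; apply: hn.
have := proj1 (proj2 hH) _ _ (cosetC hH (rep_in hH x)) hxy.
by rewrite -gmulA gmulK.
Qed.

Lemma sumF1 (R : realType) G (g : groupOn G) H (hH : is_subgroup g H)
  (f1 : {x : G | H x} -> {x : G | H x} -> R[i]) x :
  \esum_(y in [set: {classic G}]) (Normc.normc (F1 hH f1 x y))%:E =
  \esum_(b in [set: {classic {x : G | H x}}]) (Normc.normc (f1 (aa hH x) b))%:E.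
Proof.
rewrite (reindexH hH (c := rep g H x)).
  apply: eq_esum => b _; rewrite /F1; case: pselect => [hh|hn].
    by rewrite aa_rep.
  case: hn; rewrite gmulA; apply: (proj1 (proj2 hH)); [exact: rep_in | exact: proj2_sig].
move=> y /(H_rep_out hH) hn; rewrite /F1; case: pselect => // hh.
by rewrite Normc.normc0.
Qed.

Lemma sumF2 (R : realType) G (g : groupOn G) H (hH : is_subgroup g H)
  (f2 : {x : G | H x} -> {x : G | H x} -> R[i]) y :
  \esum_(x in [set: {classic G}]) (Normc.normc (F1 hH f2 x y))%:E =
  \esum_(b in [set: {classic {x : G | H x}}]) (Normc.normc (f2 b (aa hH y)))%:E.
Proof.
rewrite (reindexH hH (c := rep g H y)).
  apply: eq_esum => b _; rewrite /F1; case: pselect => [hh|hn].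
    by rewrite aa_rep.
  case: hn; apply: (cosetC hH).
  rewrite gmulA; apply: (proj1 (proj2 hH)); [exact: rep_in | exact: proj2_sig].
move=> x /(H_rep_out hH) hn; rewrite /F1; case: pselect => [hxy|hh].
  by case: hn; apply: cosetC.
by rewrite Normc.normc0.
Qed.

Lemma ginv1 G (g : groupOn G) : ginv g (gone g) = gone g.
Proof. by apply/esym/ginv_uniq; rewrite gmul1. Qed.

Lemma T1_ext (R : realType) G (g : groupOn G) H (hH : is_subgroup g H)
  (f : {x : G | H x} -> R[i]) :
  @T1 R _ (subgroupOn hH) f -> @T1 R G g (ext f).
Proof.
case=> f1 [f2 [hf [s1 s2]]].
exists (F1 hH f1), (F1 hH f2); split; [|split].
- move=> x y; rewrite /F1; case: pselect => [hxy|hn].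
    rewrite (@ext_eq _ _ _ _ _ (sub_mul hH (sub_inv hH (aa hH x)) (aa hH y))).
      exact: hf.
    exact: (aa_key hH hxy).
  by rewrite ext_out // GRing.addr0.
- apply: le_lt_trans s1; apply: ge_ereal_sup => _ [x _ <-]; rewrite sumF1.
  by apply: ereal_sup_ubound; exists (aa hH x).
- apply: le_lt_trans s2; apply: ge_ereal_sup => _ [y _ <-]; rewrite sumF2.
  by apply: ereal_sup_ubound; exists (aa hH y).
Qed.

Lemma lp_transfer (R : realType) G (g : groupOn G) H (hH : is_subgroup g H)
  (p : R) (hp : (0 < p)%R) (f : {x : G | H x} -> R[i]) :
  @lp R G p (ext f) -> @lp R _ p f.
Proof.
rewrite /lp /= (reindexH hH (c := gone g)).
  congr (_ < _); apply: eq_esum => b _.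
  by rewrite (@ext_eq _ _ _ _ _ b) // gmul1.
move=> y; rewrite ginv1 gmul1 => hn.
by rewrite ext_out // Normc.normc0 powR0 // gt_eqF.
Qed.

Unset Implicit Arguments.
Set Strict Implicit.

Theorem proposition3p4 (R : realType) (G : Type) (g : groupOn G) (H : set G)
  (hH : is_subgroup g H) :
  @Lit R _ (subgroupOn hH) <= @Lit R G g.
Proof.
apply: ereal_inf_le_tmp => _ [p [hp hsub] <-]; exists p => //; split=> // f hf.
apply: (lp_transfer hH hp); apply: hsub; exact: T1_ext.
Qed.
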